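(* Let $\phi$ be the real root of $x^3=x^2+x+1$. Let $\langle a_i\rangle_{i=1}^\infty$ be a sequence of integers, not identically zero, with $a_i=a_{i+1}+a_{i+2}+a_{i+3}$ for all $i\ge 1$ and $a_1=0$. Then for every integer $n\ge 2$, either $|a_n|>0.01\phi^{n/2}$ or $|a_{n+1}|>0.01\phi^{(n+1)/2}$ (or both). *)

(* Defs.v *)
From Stdlib Require Import Reals ZArith.

(* Main.v *)
Require Import Defs.
From Stdlib Require Import Reals ZArith.
From Stdlib Require Import Lra Lia Psatz.
Open Scope R_scope.

Lemma phi_bounds phi : phi ^ 3 = phi ^ 2 + phi + 1 -> 1839/1000 < phi < 18393/10000.
Proof. intros h. assert (0 < phi) by nra. split; nra. Qed.

Lemma K2 (al phi u w : R) : 1839/1000 < phi < 18393/10000 -> al * phi = 1 ->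
  (u + (1 + al + al) * w)^2 <= 5/2 * (u^2 + (1+al)*w*u + phi * w^2).
Proof. intros hp ha. assert (5436/10000 < al < 5438/10000) by nra.
  pose (p2 := 5/2*(1+al) - 2*(1+al+al)). pose (p3 := 5/2*phi - (1+al+al)^2).
  assert (-33/100 < p2 < -3/10) by (unfold p2; nra).
  assert (2/10 < p3) by (unfold p3; nra).
  assert (E: 5/2 * (u^2 + (1+al)*w*u + phi * w^2) - (u + (1 + al + al) * w)^2 = 3/2*u^2 + p2*w*u + p3*w^2) by (unfold p2,p3; field).
  clearbody p2 p3. assert (0 <= 3/2*u^2 + p2*w*u + p3*w^2).
  { assert (E2: 3/2*u^2 + p2*w*u + p3*w^2 = 3/2*(u + p2/3*w)^2 + (p3 - p2^2/6)*w^2) by (field).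
    rewrite E2. assert (p2^2 < 11/100) by nra. assert (0 <= p3 - p2^2/6) by lra. assert (0 <= (u + p2/3*w)^2) by apply pow2_ge_0. assert (0 <= (p3 - p2^2/6)*w^2) by (apply Rmult_le_pos; [lra|apply pow2_ge_0]). lra. }
  lra. Qed.

Definition Qx (al phi x0 x1 x2 : R) :=
  (x2 - al * x1)^2 + (1 + al) * (x1 - al * x0) * (x2 - al * x1) + phi * (x1 - al * x0)^2.

Lemma c_step al phi x0 x1 x2 x3 : x3 = x0 - x1 - x2 -> al * phi = 1 -> al + al^2 = phi - 1 ->
  x3 + (1+al)*x2 + phi*x1 = al * (x2 + (1+al)*x1 + phi*x0).
Proof. intros h1 h2 h3. subst x3.
  assert (E: al * (x2 + (1+al)*x1 + phi*x0) = al*x2 + (al+al^2)*x1 + (al*phi)*x0) by ring.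
  rewrite E, h2, h3. ring. Qed.

Lemma Q_step al phi x0 x1 x2 x3 : x3 = x0 - x1 - x2 -> al * phi = 1 -> al + al^2 = phi - 1 ->
  Qx al phi x1 x2 x3 = phi * Qx al phi x0 x1 x2.
Proof. intros h1 h2 h3. unfold Qx.
  set (b0 := x1 - al * x0). set (b1 := x2 - al * x1).
  assert (Hb : x3 - al * x2 = - (1+al) * b1 - phi * b0).
  { unfold b0, b1. subst x3.
    assert (E: - (1+al) * (x2 - al*x1) - phi * (x1 - al*x0) = -(1+al)*x2 + ((al+al^2) - phi)*x1 + (al*phi)*x0) by ring.
    rewrite E, h2, h3. ring. }
  rewrite Hb. ring. Qed.

Lemma sq_int_ge1 (z : Z) : z <> 0%Z -> 1 <= (IZR z)^2.
Proof. intros h. assert (IZR z <= -1 \/ 1 <= IZR z).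
  { destruct (Z.lt_total z 0) as [H|[H|H]]; [left|lia|right].
    - apply IZR_le. lia.
    - apply IZR_le. lia. }
  nra. Qed.

Lemma final al phi x y z F Q1 c1 :
  1839/1000 < phi < 18393/10000 -> al * phi = 1 -> phi <= F -> 1 <= Q1 ->
  c1^2 <= 5/2 * Q1 ->
  (z + (1+al)*y + phi*x) * F = c1 ->
  Qx al phi x y z = F * Q1 ->
  x^2 <= phi * F / 10000 -> y^2 <= phi^2 * F / 10000 -> False.
Proof.
  intros hp ha hF hQ hc hcn hQn hx hy.
  assert (hal : 5436/10000 < al < 5438/10000) by nra.
  set (cn := z + (1+al)*y + phi*x) in *.
  set (u := y - al*x). set (w := z - al*y). set (v := w - cn).
  assert (hv : v = -(1+2*al)*y - phi*x) by (unfold v, w, cn; ring).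
  assert (hQ2 : Qx al phi x y z = w^2 + (1+al)*u*w + phi*u^2) by (unfold Qx, u, w; ring).
  assert (h1 : F*Q1 <= 178/100 * w^2 + 262/100 * u^2).
  { assert (0 <= (u-w)^2) by apply pow2_ge_0.
    assert (0 <= u^2) by apply pow2_ge_0. assert (0 <= w^2) by apply pow2_ge_0.
    assert (0 <= (1+al)*(u-w)^2) by (apply Rmult_le_pos; [lra|apply pow2_ge_0]).
    assert (E: (1+al)*(u-w)^2 = (1+al)*u^2 + (1+al)*w^2 - 2*((1+al)*u*w)) by ring.
    assert ((1+al)*u^2 <= 15438/10000*u^2) by nra.
    assert ((1+al)*w^2 <= 15438/10000*w^2) by nra.
    assert (phi*u^2 <= 18393/10000*u^2) by nra.
    rewrite <- hQn, hQ2. lra. }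
  assert (h2 : w^2 <= 11/10 * cn^2 + 11 * v^2).
  { assert (w = cn + v) by (unfold v; ring). assert (0 <= (cn/10 - v)^2) by apply pow2_ge_0. nra. }
  assert (hF0 : 0 < F) by lra.
  assert (hX0 : 0 <= x^2) by apply pow2_ge_0.
  assert (hY0 : 0 <= y^2) by apply pow2_ge_0.
  assert (hp2 : phi^2 <= 339/100) by nra.
  assert (hX : x^2 <= 184/100 * F / 10000).
  { assert (phi * F <= 184/100 * F) by (apply Rmult_le_compat_r; lra). lra. }
  assert (hY : y^2 <= 339/100 * F / 10000).
  { assert (phi^2 * F <= 339/100 * F) by (apply Rmult_le_compat_r; lra). lra. }
  assert (h3 : v^2 <= 5/1000 * F).
  { rewrite hv. assert (0 <= (((1+2*al)*y) - phi*x)^2) by apply pow2_ge_0.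
    assert (ha2 : (1+2*al)^2 <= 436/100) by nra.
    assert (((1+2*al)*y)^2 <= 436/100 * y^2) by (rewrite Rpow_mult_distr; apply Rmult_le_compat_r; lra).
    assert ((phi*x)^2 <= 339/100 * x^2) by (rewrite Rpow_mult_distr; apply Rmult_le_compat_r; lra).
    assert (E: (-(1+2*al)*y - phi*x)^2 = 2*((1+2*al)*y)^2 + 2*(phi*x)^2 - (((1+2*al)*y) - phi*x)^2) by ring.
    rewrite E. lra. }
  assert (h4 : u^2 <= 1/1000 * F).
  { unfold u. assert (0 <= (y + al*x)^2) by apply pow2_ge_0.
    assert (ha2 : al^2 <= 3/10) by nra.
    assert ((al*x)^2 <= 3/10 * x^2) by (rewrite Rpow_mult_distr; apply Rmult_le_compat_r; lra).
    assert (E: (y - al*x)^2 = 2*y^2 + 2*(al*x)^2 - (y + al*x)^2) by ring.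
    rewrite E. lra. }
  assert (h5 : F*Q1 <= 196/100 * cn^2 + 11/100 * F) by nra.
  assert (h6 : (cn*F)^2 <= 5/2*Q1) by (rewrite hcn; exact hc).
  rewrite Rpow_mult_distr in h6.
  assert (hF2 : 0 < F^2) by nra.
  assert (h7 : F^3*Q1 <= 49/10 * Q1 + 11/100 * F^3).
  { assert (F^2 * (F*Q1) <= F^2 * (196/100 * cn^2 + 11/100 * F)) by (apply Rmult_le_compat_l; lra).
    assert (E1: F^2 * (F*Q1) = F^3 * Q1) by ring.
    assert (E2: F^2 * (196/100 * cn^2 + 11/100 * F) = 196/100 * (cn^2*F^2) + 11/100*F^3) by ring.
    nra. }
  assert (hF3 : 62/10 <= F^3).
  { assert (phi^3 <= F^3) by (apply pow_incr; lra).
    assert (E: phi^3 = phi*(phi*phi)) by ring.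
    assert (1839/1000 * (1839/1000) <= phi*phi) by (apply Rmult_le_compat; lra).
    assert (1839/1000 * (1839/1000 * (1839/1000)) <= phi*(phi*phi)) by (apply Rmult_le_compat; lra).
    lra. }
  assert ((F^3 - 49/10) * Q1 >= (F^3 - 49/10) * 1) by (apply Rle_ge, Rmult_le_compat_l; lra).
  nra.
Qed.

Theorem corollary1 (phi : R) (hphi : phi ^ 3 = phi ^ 2 + phi + 1)
  (a : nat -> Z)
  (hrec : forall i : nat, (1 <= i)%nat -> a i = (a (i + 1)%nat + a (i + 2)%nat + a (i + 3)%nat)%Z)
  (ha1 : a 1%nat = 0%Z)
  (hnz : exists i : nat, (1 <= i)%nat /\ a i <> 0%Z) :
  forall n : nat, (2 <= n)%nat ->
    Rabs (IZR (a n)) > Rpower phi (INR n / 2) / 100 \/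
    Rabs (IZR (a (n + 1)%nat)) > Rpower phi (INR (n + 1) / 2) / 100.
Proof.
  intros n hn.
  pose proof (phi_bounds phi hphi) as hpb.
  assert (hp0 : 0 < phi) by lra.
  set (al := / phi).
  assert (hal : al * phi = 1) by (unfold al; field; lra).
  assert (hal2 : al + al^2 = phi - 1).
  { assert (E: al + al^2 - (phi - 1) = al^2 * (phi^2 + phi + 1 - phi^3)).
    { assert (E1: al^2 * phi^3 = (al*phi)^2*phi) by ring.
      assert (E2: al^2 * phi^2 = (al*phi)^2) by ring.
      assert (E3: al^2 * phi = (al*phi)*al) by ring.
      assert (E4: al^2 * (phi^2 + phi + 1 - phi^3) = al^2*phi^2 + al^2*phi + al^2 - al^2*phi^3) by ring.
      rewrite E4, E1, E2, E3, hal. ring. }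
    rewrite hphi in E. lra. }
  set (A := fun i => IZR (a i)).
  assert (hfw : forall i, (1 <= i)%nat -> A (i+3)%nat = A i - A (i+1)%nat - A (i+2)%nat).
  { intros i hi. unfold A. rewrite <- !minus_IZR. f_equal. specialize (hrec i hi). lia. }
  set (cf := fun i => A (i+2)%nat + (1+al)*A (i+1)%nat + phi * A i).
  set (Qf := fun i => Qx al phi (A i) (A (i+1)%nat) (A (i+2)%nat)).
  assert (hcit : forall k, cf (1+k)%nat = al^k * cf 1%nat).
  { induction k as [|k IH].
    - simpl. ring.
    - replace (1 + S k)%nat with ((1+k)+1)%nat by lia.
      assert (cf ((1+k)+1)%nat = al * cf (1+k)%nat).
      { unfold cf. replace ((1+k)+1+2)%nat with ((1+k)+3)%nat by lia.
        replace ((1+k)+1+1)%nat with ((1+k)+2)%nat by lia.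
        apply c_step; auto. apply hfw. lia. }
      rewrite H, IH. simpl. ring. }
  assert (hQit : forall k, Qf (1+k)%nat = phi^k * Qf 1%nat).
  { induction k as [|k IH].
    - simpl. ring.
    - replace (1 + S k)%nat with ((1+k)+1)%nat by lia.
      assert (Qf ((1+k)+1)%nat = phi * Qf (1+k)%nat).
      { unfold Qf. replace ((1+k)+1+2)%nat with ((1+k)+3)%nat by lia.
        replace ((1+k)+1+1)%nat with ((1+k)+2)%nat by lia.
        apply Q_step; auto. apply hfw. lia. }
      rewrite H, IH. simpl. ring. }
  assert (hA1 : A 1%nat = 0) by (unfold A; rewrite ha1; reflexivity).
  assert (hnz23 : a 2%nat <> 0%Z \/ a 3%nat <> 0%Z).
  { destruct (Z.eq_dec (a 2%nat) 0) as [h2|h2]; [|left; exact h2].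
    destruct (Z.eq_dec (a 3%nat) 0) as [h3|h3]; [|right; exact h3].
    exfalso.
    assert (hall : forall m, a (1+m)%nat = 0%Z /\ a (2+m)%nat = 0%Z /\ a (3+m)%nat = 0%Z).
    { induction m as [|m [i1 [i2 i3]]].
      - simpl. auto.
      - replace (1 + S m)%nat with (2+m)%nat by lia.
        replace (2 + S m)%nat with (3+m)%nat by lia.
        replace (3 + S m)%nat with ((1+m)+3)%nat by lia.
        split; [exact i2|split; [exact i3|]].
        pose proof (hrec (1+m)%nat ltac:(lia)) as hr.
        replace ((1+m)+1)%nat with (2+m)%nat in hr by lia.
        replace ((1+m)+2)%nat with (3+m)%nat in hr by lia.
        lia. }
    destruct hnz as [i [hi hai]]. apply hai.
    replace i with (1 + (i-1))%nat by lia. apply hall. }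
  set (Q1 := Qf 1%nat).
  assert (hQ1e : Q1 = Qx al phi 0 (A 2%nat) (A 3%nat)) by (unfold Q1, Qf; rewrite hA1; reflexivity).
  assert (hQ1 : 1 <= Q1).
  { rewrite hQ1e. unfold Qx.
    destruct (Z.eq_dec (a 2%nat) 0) as [h2|h2].
    - destruct hnz23 as [h|h]; [contradiction|].
      pose proof (sq_int_ge1 _ h). unfold A. rewrite h2.
      replace (IZR 0) with 0 by reflexivity.
      assert (E: (IZR (a 3%nat) - al * 0) ^ 2 + (1 + al) * (0 - al * 0) * (IZR (a 3%nat) - al * 0) + phi * (0 - al * 0) ^ 2 = IZR (a 3%nat) ^2) by ring.
      rewrite E. exact H.
    - pose proof (sq_int_ge1 _ h2) as H2.
      fold (A 2%nat) in H2.
      set (w := A 2%nat) in *. set (z := A 3%nat).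
      assert (0 <= (z - al*w + (1+al)/2*w)^2) by apply pow2_ge_0.
      assert (E: (z - al * w) ^ 2 + (1 + al) * (w - al * 0) * (z - al * w) + phi * (w - al * 0) ^ 2
                 = (z - al*w + (1+al)/2*w)^2 + (phi - (1+al)^2/4) * w^2) by field.
      rewrite E.
      assert (hal' : 5436/10000 < al < 5438/10000) by nra.
      assert (1 <= phi - (1+al)^2/4) by nra.
      assert (1 * w^2 <= (phi - (1+al)^2/4) * w^2) by (apply Rmult_le_compat_r; lra).
      lra. }
  set (c1 := cf 1%nat).
  assert (hc1 : c1^2 <= 5/2 * Q1).
  { rewrite hQ1e. unfold c1, cf. simpl (1+2)%nat. simpl (1+1)%nat. rewrite hA1.
    pose proof (K2 al phi (A 3%nat - al * A 2%nat) (A 2%nat) hpb hal) as HK.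
    assert (E1: A 3%nat + (1 + al) * A 2%nat + phi * 0 = A 3%nat - al * A 2%nat + (1 + al + al) * A 2%nat) by ring.
    assert (E2: Qx al phi 0 (A 2%nat) (A 3%nat) = (A 3%nat - al * A 2%nat)^2 + (1+al)*A 2%nat*(A 3%nat - al * A 2%nat) + phi * A 2%nat^2) by (unfold Qx; ring).
    rewrite E1, E2. exact HK. }
  destruct (Rle_or_lt (Rabs (IZR (a n))) (Rpower phi (INR n / 2) / 100)) as [hx|hx];
    [|left; exact hx].
  destruct (Rle_or_lt (Rabs (IZR (a (n+1)%nat))) (Rpower phi (INR (n+1) / 2) / 100)) as [hy|hy];
    [|right; exact hy].
  exfalso.
  set (k := (n - 1)%nat).
  assert (hnk : n = (1 + k)%nat) by (unfold k; lia).
  set (F := phi^k).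
  assert (hF : phi <= F).
  { unfold F. replace phi with (phi^1) at 1 by ring. apply Rle_pow; [lra|unfold k; lia]. }
  set (S := Rpower phi (INR n / 2)).
  set (T := Rpower phi (INR (n+1) / 2)).
  assert (hS : S * S = phi * F).
  { unfold S. rewrite <- Rpower_plus.
    replace (INR n / 2 + INR n / 2) with (INR n) by field.
    rewrite Rpower_pow by lra. rewrite hnk. unfold F. simpl. ring. }
  assert (hT : T * T = phi^2 * F).
  { unfold T. rewrite <- Rpower_plus.
    replace (INR (n+1) / 2 + INR (n+1) / 2) with (INR (n+1)) by field.
    rewrite Rpower_pow by lra. rewrite hnk. unfold F.
    replace (1 + k + 1)%nat with (2 + k)%nat by lia. simpl. ring. }
  assert (hS0 : 0 < S) by (unfold S; apply exp_pos).
  assert (hT0 : 0 < T) by (unfold T; apply exp_pos).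
  assert (hx2 : (A n)^2 <= phi * F / 10000).
  { unfold A. rewrite <- pow2_abs. pose proof (Rabs_pos (IZR (a n))). fold S in hx. nra. }
  assert (hy2 : (A (n+1)%nat)^2 <= phi^2 * F / 10000).
  { unfold A. rewrite <- pow2_abs. pose proof (Rabs_pos (IZR (a (n+1)%nat))). fold T in hy. nra. }
  apply (final al phi (A n) (A (n+1)%nat) (A (n+2)%nat) F Q1 c1 hpb hal hF hQ1 hc1).
  - fold (cf n). rewrite hnk, hcit. unfold c1, F.
    assert (E: al ^ k * cf 1%nat * phi ^ k = (al*phi)^k * cf 1%nat) by (rewrite Rpow_mult_distr; ring).
    rewrite E, hal, pow1. ring.
  - fold (Qf n). rewrite hnk, hQit. reflexivity.
  - exact hx2.
  - exact hy2.
Qed.
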